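(* Consider the age-structured multispecies map $h$ described in the context, and suppose $\bm{y}^\ast=h(\bm{y}^\ast)$ is an equilibrium whose adult part is an interior equilibrium $\bm{x}^\ast=(y^\ast_{\delta_1\mid 1},\dots,y^\ast_{\delta_m\mid m})^\top>\bm{0}$ (all entries positive). Let $\bm{J}^\ast$ be the $n\times n$ Jacobian of $h$ at $\bm{y}^\ast$, $n=m+\sum_{i}\delta_i$, and let a permutation bring $\bm{J}^\ast$ to lower block-triangular form whose diagonal blocks $\bm{J}^\ast(\alpha_w,\alpha_w)$, $w=1,\dots,r$, are square and either irreducible or a $1\times 1$ zero, where $\alpha_1,\dots,\alpha_r$ is the corresponding partition of the index set. For each $w$ let $\mathcal{D}_w\subseteq\mathcal{M}$ be the set of species having nodes (age classes) in $\alpha_w$. If for every $w\in\{1,\dots,r\}$ and every $i\in\mathcal{D}_w$ $$\Bigl\{\Bigl|G_i(\bm{x}^\ast)+x_i^\ast\tfrac{\partial G_i}{\partial x_i}(\bm{x}^\ast)\Bigr| + \sum_{j\in\mathcal{D}_w\setminus\{i\}}\Bigl|x_i^\ast\tfrac{\partial G_i}{\partial x_j}(\bm{x}^\ast)\Bigr|\Bigr\}\prod_{a=0}^{\delta_i-1}\sigma_{a\mid i} \;<\; z_i,$$ then $\rho(\bm{J}^\ast)<1$, i.e. the equilibrium is locally asymptotically stable.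
   Context: Let $m\ge 1$ and $\mathcal{M}=\{1,\dots,m\}$. For each species $i\in\mathcal{M}$: a maturation delay $\delta_i\in\{0,1,2,\dots\}$; immature survival probabilities $\sigma_{a\mid i}\in(0,1]$ for $a=0,\dots,\delta_i-1$; an adult survival probability $\sigma_{\delta_i\mid i}\in(0,1)$ with adult mortality $z_i=1-\sigma_{\delta_i\mid i}$; an empty product $\prod_{a=0}^{-1}$ equals $1$. Each $G_i:\mathbb{R}^m\to\mathbb{R}$ is a differentiable per capita growth function. The state is $\bm{y}=(y_{a\mid i})$, indexed by $i\in\mathcal{M}$, $a\in\{0,\dots,\delta_i\}$ (ordered species by species), of dimension $n=m+\sum_i\delta_i$; the adult vector is $\bm{x}=(y_{\delta_1\mid 1},\dots,y_{\delta_m\mid m})^\top$. The map $h:\mathbb{R}^n\to\mathbb{R}^n$ is: if $\delta_i>0$, $h_{0\mid i}(\bm{y})=G_i(\bm{x})\,y_{\delta_i\mid i}$, $h_{a\mid i}(\bm{y})=\sigma_{a-1\mid i}y_{a-1\mid i}$ for $1\le a\le\delta_i-1$, and $h_{\delta_i\mid i}(\bm{y})=\sigma_{\delta_i-1\mid i}y_{\delta_i-1\mid i}+\sigma_{\delta_i\mid i}y_{\delta_i\mid i}$; if $\delta_i=0$, $h_{0\mid i}(\bm{y})=\sigma_{0\mid i}y_{0\mid i}+G_i(\bm{x})y_{0\mid i}$. (This is equivalent to the delay system $x_i(t+1)=\sigma_{\delta_i\mid i}x_i(t)+x_i(t-\delta_i)G_i(\bm{x}(t-\delta_i))\prod_{a=0}^{\delta_i-1}\sigma_{a\mid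 i}$.) The Jacobian $\bm{J}^\ast$ at an equilibrium $\bm{y}^\ast$ has entries $\partial h_{a\mid i}/\partial y_{b\mid j}$ evaluated at $\bm{y}^\ast$; in particular the entry of row $(0\mid i)$, column $(\delta_i\mid i)$ is $G_i(\bm{x}^\ast)+x_i^\ast\partial G_i/\partial x_i(\bm{x}^\ast)$ (plus $\sigma_{0\mid i}$ if $\delta_i=0$) and the entry of row $(0\mid i)$, column $(\delta_j\mid j)$, $j\neq i$, is $x_i^\ast\partial G_i/\partial x_j(\bm{x}^\ast)$. $\rho(\cdot)$ denotes spectral radius. An equilibrium is called locally asymptotically stable if $\rho(\bm{J}^\ast)<1$. *)

(* Defs.v *)
From HB Require Import structures.
From mathcomp Require Import all_boot all_order all_algebra.
From mathcomp Require Import all_classical all_reals all_analysis.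
From mathcomp Require Import complex.

Set Implicit Arguments.
Unset Strict Implicit.
Unset Printing Implicit Defensive.

Import Order.TTheory GRing.Theory Num.Theory.
Import numFieldNormedType.Exports.
Local Open Scope ring_scope.

(* Nodes (age classes) (a | i), i species, 0 <= a <= delta_i.
   The number of nodes is n = m + sum_i delta_i. *)
Definition node (m : nat) (delta : 'I_m -> nat) : finType :=
  {i : 'I_m & 'I_(delta i).+1}.

Definition spec {m} {delta : 'I_m -> nat} (p : node delta) : 'I_m := tag p.
Definition age {m} {delta : 'I_m -> nat} (p : node delta) : nat := tagged p.

Definition adults (R : realType) m (delta : 'I_m -> nat)
    (y : node delta -> R) : 'rV[R]_m :=
  \row_i y (@Tagged _ i (fun i => 'I_(delta i).+1) ord_max).

Definition pderiv (R : realType) m (F : 'rV[R]_m -> R) (j : 'I_m) (x : 'rV[R]_m) : R :=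
  'D_(delta_mx 0 j) F x.

(* The map h of the model; sigma i a = sigma_{a|i}. *)
Definition hmap (R : realType) m (delta : 'I_m -> nat) (sigma : 'I_m -> nat -> R)
    (G : 'I_m -> 'rV[R]_m -> R) (y : node delta -> R) (p : node delta) : R :=
  let i := spec p in let a := age p in
  let yi := fun b : nat => y (@Tagged _ i (fun i => 'I_(delta i).+1) (inord b)) in
  if delta i == 0%N then sigma i 0%N * yi 0%N + G i (adults y) * yi 0%N
  else if a == 0%N then G i (adults y) * yi (delta i)
  else if (a < delta i)%N then sigma i a.-1 * yi a.-1
  else sigma i a.-1 * yi a.-1 + sigma i (delta i) * yi (delta i).

(* The Jacobian of hmap at y (entries written out as in the paper):
   row (a|i), column (b|j). *)
Definition jac (R : realType) m (delta : 'I_m -> nat) (sigma : 'I_m -> nat -> R)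
    (G : 'I_m -> 'rV[R]_m -> R) (y : node delta -> R) (p q : node delta) : R :=
  let i := spec p in let a := age p in let j := spec q in let b := age q in
  let x := adults y in
  (if (a == 0%N) && (b == delta j) then
     (if i == j then G i x else 0) + x 0 i * pderiv (G i) j x else 0)
  + (if (i == j) && (b.+1 == a) then sigma i b else 0)
  + (if (i == j) && (a == delta i) && (b == delta i) then sigma i (delta i) else 0).

Definition fmx (R : Type) (T : finType) (A : T -> T -> R) : 'M[R]_#|T| :=
  \matrix_(k, l) A (enum_val k) (enum_val l).

Definition spectral_radius_lt1 (R : realType) k (A : 'M[R]_k) : Prop :=
  forall lam : R[i], eigenvalue (map_mx (fun t : R => (t%:C)%C) A) lam -> `|lam| < 1.

(* A square sub-block A(S,S) is irreducible (a 1x1 block always counts, which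
   covers "irreducible or 1x1 zero"): no nonempty proper subset T of S with
   A(T, S\T) = 0. *)
Definition block_irreducible (R : pzRingType) (T : finType) (A : T -> T -> R)
    (S : {set T}) : Prop :=
  forall U : {set T}, U \subset S -> U != finset.set0 -> U != S ->
    exists p q, [/\ p \in U, q \in S :\: U & A p q != 0].

(* Main.v *)
Require Import Defs.
From HB Require Import structures.
From mathcomp Require Import all_boot all_order all_algebra.
From mathcomp Require Import all_classical all_reals all_analysis.
From mathcomp Require Import complex.
From mathcomp Require Import ring lra.
Import Order.TTheory GRing.Theory Num.Theory.
Import numFieldNormedType.Exports.
Local Open Scope ring_scope.

Lemma node_eq m (delta : 'I_m -> nat) (q : node delta) i (c : 'I_(delta i).+1) :
  (q == Tagged (fun i => 'I_(delta i).+1) c) = (spec q == i) && (age q == c).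
Proof.
case: q => j b; rewrite /spec /age /=.
case: (eqVneq j i) => [e|ne] /=; first by subst j; rewrite eq_Tagged.
apply/negbTE/negP => /eqP/(congr1 (@tag _ _)) /= h.
by rewrite h eqxx in ne.
Qed.

Lemma sum_pick (R : realType) (T : finType) (P : pred T) q0 (F : T -> R) :
  \sum_(q | P q) (if q == q0 then F q else 0) = if P q0 then F q0 else 0.
Proof.
rewrite -big_mkcondr; case hP: (P q0).
  by rewrite (big_pred1 q0) // => q /=; case: eqP => [->|]; rewrite ?hP ?andbF.
by rewrite big_pred0 // => q /=; case: eqP => [->|]; rewrite ?hP ?andbF.
Qed.

Lemma rowbound (R : realType) (m : nat) (delta : 'I_m -> nat)
    (sigma : 'I_m -> nat -> R) (G : 'I_m -> 'rV[R]_m -> R)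
    (y : node delta -> R) (r : nat) (blk : node delta -> 'I_r) (w : 'I_r) :
  (forall i a, (a < delta i)%N -> 0 < sigma i a <= 1) ->
  (forall i, 0 < sigma i (delta i) < 1) ->
  (forall (i : 'I_m),
     let D := [set j : 'I_m | [exists p : node delta, (spec p == j) && (blk p == w)]] in
     let x := adults y in
     i \in D ->
     (`|G i x + x 0 i * pderiv (G i) i x|
        + \sum_(j in D | j != i) `|x 0 i * pderiv (G i) j x|)
       * \prod_(a < delta i) sigma i a
     < 1 - sigma i (delta i)) ->
  exists vv : node delta -> R, (forall q, blk q = w -> 0 <= vv q) /\
     (forall p, blk p = w -> \sum_(q | blk q == w) `|jac sigma G y p q| * vv q < vv p).
Proof.
move=> Hs Hsd Hc.
pose x := adults y.
pose D := [set j : 'I_m | [exists p : node delta, (spec p == j) && (blk p == w)]].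
pose K i := `|G i x + x 0 i * pderiv (G i) i x| + \sum_(j in D | j != i) `|x 0 i * pderiv (G i) j x|.
pose P i a := \prod_(b < a) sigma i b.
pose eps i := (1 - sigma i (delta i) - K i * P i (delta i)) / (delta i).+1%:R.
pose vv (q : node delta) := if age q == delta (spec q) then 1
   else K (spec q) * P (spec q) (age q) + (age q).+1%:R * eps (spec q).
pose c i j := (if i == j then G i x else 0) + x 0 i * pderiv (G i) j x.
have HcK i : i \in D -> K i * P i (delta i) < 1 - sigma i (delta i) := Hc i.
have K0 i : 0 <= K i by rewrite addr_ge0 // sumr_ge0.
have sig0 i b : (b < delta i)%N -> 0 <= sigma i b.
  by move=> hb; have /andP [h _] := Hs i b hb; apply: ltW.
have sig1 i b : (b < delta i)%N -> sigma i b <= 1.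
  by move=> hb; have /andP [_ h] := Hs i b hb.
have P0 i a : (a <= delta i)%N -> 0 <= P i a.
  move=> ha; apply: prodr_ge0 => b _; apply: sig0; exact: leq_trans (ltn_ord b) ha.
have PS i b : P i b.+1 = P i b * sigma i b by rewrite /P big_ord_recr.
have eps0 i : i \in D -> 0 < eps i.
  move=> hi; rewrite /eps divr_gt0 //; have := HcK i hi; lra.
have inD q : blk q = w -> spec q \in D.
  by move=> hq; rewrite /D inE; apply/existsP; exists q; rewrite eqxx hq eqxx.
have ageq (q : node delta) : (age q <= delta (spec q))%N := ltn_ord (tagged q).
have vv0 q : spec q \in D -> 0 <= vv q.
  move=> hq; rewrite /vv; case: ifP => _ //.
  by rewrite addr_ge0 // mulr_ge0 // ?P0 // ltW // eps0.
exists vv; split; first by move=> q hq; apply: vv0; apply: inD.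
move=> p hp.
have hiD := inD p hp.
set i := spec p in hiD *.
set a := age p.
have ai : (a <= delta i)%N := ageq p.
pose prev := Tagged (fun i => 'I_(delta i).+1) (@inord (delta i) a.-1).
pose top := Tagged (fun i => 'I_(delta i).+1) (@ord_max (delta i)).
pose T1 (q : node delta) := if (a == 0%N) && (age q == delta (spec q)) then `|c i (spec q)| else 0.
pose T2 (q : node delta) := if (0 < a)%N && (q == prev) then sigma i a.-1 * vv q else 0.
pose T3 (q : node delta) := if (a == delta i) && (q == top) then sigma i (delta i) else 0.
have term q : blk q == w -> `|jac sigma G y p q| * vv q <= T1 q + T2 q + T3 q.
  move=> /eqP hq; have hv := vv0 q (inD q hq).
  rewrite /jac /=.
  apply: le_trans (ler_wpM2r hv (le_trans (ler_normD _ _) (lerD (ler_normD _ _) (lexx _)))) _.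
  rewrite !mulrDl; apply: lerD; [apply: lerD|].
  - rewrite /T1; case: ifP => h; last by rewrite normr0 mul0r.
    by move/andP: h => [_ h]; rewrite /vv h mulr1.
  - case: ifP => h; last first.
      rewrite normr0 mul0r /T2; case: ifP => // /andP [h1 _].
      by rewrite mulr_ge0 // sig0 // prednK.
    move/andP: h => [/eqP hi /eqP ha]; rewrite -/a in ha; rewrite -/i in hi.
    have apos : (0 < a)%N by rewrite -ha.
    have hprev : q == prev.
      rewrite node_eq -hi eqxx /= inordK -ha //.
      by rewrite ltnS (leq_trans (leqnSn _)) // ha.
    rewrite /T2 apos hprev /= -ha /= ger0_norm //.
    by rewrite sig0 // -ltnS ha.
  - case: ifP => h; last first.
      rewrite normr0 mul0r /T3; case: ifP => // /andP [h1 _].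
      by apply: ltW; case/andP: (Hsd i).
    move/andP: h => [/andP [/eqP hi ha] hqq]; rewrite -/a in ha; rewrite -/i in hi ha hqq.
    have htop : q == top by rewrite node_eq -hi eqxx.
    rewrite /T3 ha htop /= /vv -hi hqq mulr1 ger0_norm //.
    by apply: ltW; case/andP: (Hsd i).
have sd0 : 0 <= sigma i (delta i) by apply: ltW; case/andP: (Hsd i).
have S1 : \sum_(q | blk q == w) T1 q <= (if a == 0%N then K i else 0).
  rewrite /T1; case: (a == 0%N) => /=; last by rewrite big1.
  pose h j := `|c i j|.
  have e q : (if age q == delta (spec q) then h (spec q) else 0) =
     \sum_j (if q == Tagged (fun i => 'I_(delta i).+1) (@ord_max (delta j)) then h j else 0).
    rewrite (eq_bigr (fun j => if j == spec q then (if age q == delta j then h j else 0) else 0)).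
      by rewrite sum_pick.
    move=> j _; rewrite node_eq; case: (eqVneq j (spec q)) => [->|ne]; first by rewrite ?eqxx /=.
    by [].
  rewrite (eq_bigr _ (fun q _ => e q)) exchange_big /=.
  rewrite (eq_bigr (fun j => if blk (Tagged (fun i => 'I_(delta i).+1) (@ord_max (delta j))) == w
      then h j else 0)); last by move=> j _; rewrite sum_pick.
  have KD : \sum_(j in D) h j = K i.
    rewrite (bigD1 i hiD) /= /h /c eqxx; congr (_ + _).
    by apply: eq_bigr => j /andP [_ hj]; rewrite eq_sym (negbTE hj) add0r.
  rewrite -KD [X in _ <= X]big_mkcond; apply: ler_sum => j _; case: ifP => hb.
    rewrite ifT //; rewrite /D inE; apply/existsP.
    by exists (Tagged (fun i => 'I_(delta i).+1) (@ord_max (delta j))); rewrite /spec /= eqxx hb.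
  by case: ifP => // _; rewrite /h normr_ge0.
have S2 : \sum_(q | blk q == w) T2 q <= (if (0 < a)%N then sigma i a.-1 * vv prev else 0).
  rewrite /T2; case apos: (0 < a)%N => /=; last by rewrite big1.
  rewrite sum_pick; case: ifP => // _.
  by rewrite mulr_ge0 // ?sig0 ?prednK // vv0.
have S3 : \sum_(q | blk q == w) T3 q <= (if a == delta i then sigma i (delta i) else 0).
  rewrite /T3; case: (a == delta i) => /=; last by rewrite big1.
  by rewrite sum_pick; case: ifP.
apply: le_lt_trans; first by apply: ler_sum => q hq; apply: term.
rewrite !big_split /=.
apply: le_lt_trans (lerD (lerD S1 S2) S3) _.
rewrite /vv -/i -/a.
have e0 := eps0 i hiD.
have hK := HcK i hiD.
have k0 := K0 i.
case: (posnP a) => [a0 | apos].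
  rewrite a0 /=; case hd: (0%N == delta i).
    have P1 : P i (delta i) = 1 by rewrite /P -(eqP hd) big_ord0.
    rewrite P1 in hK; lra.
  have P1 : P i 0 = 1 by rewrite /P big_ord0.
  rewrite P1; lra.
have a0 : (a == 0%N) = false by apply/negbTE; rewrite -lt0n.
have ap : (a.-1 < (delta i).+1)%N by rewrite ltnS (leq_trans (leq_pred a)).
have agep : age prev = a.-1 by rewrite /age /= inordK.
have hprev : (age prev == delta (spec prev)) = false.
  by rewrite agep /=; apply: ltn_eqF; rewrite (leq_trans _ ai) // ltn_predL.
rewrite ?a0 ?apos hprev agep /= prednK //.
have PSa : P i a = P i a.-1 * sigma i a.-1 by rewrite -PS prednK.
have s0 : 0 <= sigma i a.-1 by rewrite sig0 // prednK.
have s1 : sigma i a.-1 <= 1 by rewrite sig1 // prednK.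
have ae0 : 0 <= a%:R * eps i by rewrite mulr_ge0 // ltW.
have hs : sigma i a.-1 * (a%:R * eps i) <= a%:R * eps i by rewrite ler_piMl.
have P0' : 0 <= P i a.-1 by rewrite P0 // (leq_trans (leq_pred a)).
case hd: (a == delta i).
  have epsE : eps i * (delta i).+1%:R = 1 - sigma i (delta i) - K i * P i (delta i).
    by rewrite /eps divfK // pnatr_eq0.
  rewrite -natr1 -(eqP hd) in epsE.
  rewrite -(eqP hd) PSa in hK.
  rewrite PSa in epsE.
  set S := sigma i a.-1 in hs hK epsE s0 s1 *.
  set Q := P i a.-1 in hK epsE P0' *.
  set e := eps i in hs e0 epsE ae0 *.
  set k := K i in hK epsE k0 *.
  set n := a%:R in hs epsE ae0 *.
  rewrite -(eqP hd); nra.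
rewrite PSa -natr1.
set S := sigma i a.-1 in hs s0 s1 *.
set Q := P i a.-1 in P0' *.
set e := eps i in hs e0 ae0 *.
set k := K i in k0 *.
set n := a%:R in hs ae0 *.
nra.
Qed.

Lemma core (C : numFieldType) (T : finType) (r : nat) (blk : T -> 'I_r)
  (M : T -> T -> C) (u : T -> C) (lam : C) :
 (forall p q, (blk p < blk q)%N -> M p q = 0) ->
 (forall w : 'I_r, exists V : T -> C, (forall q, blk q = w -> 0 <= V q) /\
     (forall p, blk p = w -> \sum_(q | blk q == w) `|M p q| * V q < V p)) ->
 (forall q, \sum_p u p * M p q = lam * u q) ->
 (exists p, u p != 0) -> `|lam| < 1.
Proof.
move=> Hlt HV Heig [p0 Hp0].
case: (@arg_maxnP T p0 (fun p => u p != 0) (fun p => nat_of_ord (blk p)) Hp0).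
move=> p1 Hp1 Hmax.
set w := blk p1.
have [V [V0 HVr]] := HV w.
have uz p : (w < blk p)%N -> u p = 0.
  move=> hp; apply/eqP; apply/negPn/negP => hu.
  by move: (Hmax p hu) => /=; rewrite leqNgt hp.
have eqq q : blk q == w -> lam * u q = \sum_(p | blk p == w) u p * M p q.
  move=> /eqP hq; rewrite -Heig (bigID (fun p => blk p == w)) /=.
  rewrite [X in _ + X]big1 ?addr0 // => p hp.
  case: (ltngtP (blk p) w) => h.
  - by rewrite Hlt ?mulr0 // hq.
  - by rewrite uz ?mul0r.
  - by move: hp; rewrite (val_inj h) eqxx.
have ineq q : blk q == w -> `|lam| * `|u q| <= \sum_(p | blk p == w) `|u p| * `|M p q|.
  move=> hq; rewrite -normrM eqq //; apply: le_trans (ler_norm_sum _ _ _) _.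
  by apply: ler_sum => p _; rewrite normrM.
have Vp1 : 0 < V p1.
  apply: le_lt_trans (HVr p1 erefl); apply: sumr_ge0 => q /eqP hq.
  by rewrite mulr_ge0 ?V0.
set S := \sum_(q | blk q == w) `|u q| * V q.
have S0 : 0 < S.
  rewrite /S (bigD1 p1) //=; apply: ltr_wpDr.
    by apply: sumr_ge0 => q /andP [/eqP hq _]; rewrite mulr_ge0 ?V0.
  by rewrite mulr_gt0 // normr_gt0.
have : `|lam| * S < 1 * S.
  rewrite mul1r; apply: (@le_lt_trans _ _ (\sum_(q | blk q == w)
      (\sum_(p | blk p == w) `|u p| * `|M p q|) * V q)).
    rewrite /S mulr_sumr; apply: ler_sum => q hq.
    by rewrite mulrA ler_wpM2r ?V0 ?(eqP hq) ?ineq.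
  rewrite (eq_bigr (fun q => \sum_(p | blk p == w) `|u p| * `|M p q| * V q));
    last by move=> q _; rewrite mulr_suml.
  rewrite exchange_big /=.
  rewrite (eq_bigr (fun p => `|u p| * \sum_(q | blk q == w) `|M p q| * V q));
    last by move=> p _; rewrite mulr_sumr; apply: eq_bigr => q _; rewrite mulrA.
  rewrite /S (bigD1 p1) //= [X in _ < X](bigD1 p1) //=.
  apply: ltr_leD.
    by rewrite ltr_pM2l ?normr_gt0 // HVr.
  apply: ler_sum => p /andP [/eqP hp _].
  by rewrite ler_wpM2l // ltW // HVr.
by rewrite ltr_pM2r.
Qed.

Lemma normC_real (R : realType) (t : R) : `|(t%:C)%C| = ((`|t|)%:C)%C.
Proof. by rewrite normc_def /= expr0n /= addr0 sqrtr_sqr. Qed.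

Theorem theorem3 (R : realType) (m : nat) (delta : 'I_m -> nat)
    (sigma : 'I_m -> nat -> R) (G : 'I_m -> 'rV[R]_m -> R)
    (y : node delta -> R) (r : nat) (blk : node delta -> 'I_r) :
  (forall i a, (a < delta i)%N -> 0 < sigma i a <= 1) ->
  (forall i, 0 < sigma i (delta i) < 1) ->
  (forall i x, differentiable (G i) x) ->
  hmap sigma G y = y ->
  (forall i, 0 < adults y 0 i) ->
  (forall w : 'I_r, exists p, blk p = w) ->
  (forall p q, (blk p < blk q)%N -> jac sigma G y p q = 0) ->
  (forall w : 'I_r, block_irreducible (jac sigma G y) [set p | blk p == w]) ->
  (forall (w : 'I_r) (i : 'I_m),
     let D := [set j : 'I_m | [exists p : node delta, (spec p == j) && (blk p == w)]] in
     let x := adults y in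
     i \in D ->
     (`|G i x + x 0 i * pderiv (G i) i x|
        + \sum_(j in D | j != i) `|x 0 i * pderiv (G i) j x|)
       * \prod_(a < delta i) sigma i a
     < 1 - sigma i (delta i)) ->
  spectral_radius_lt1 (fmx (jac sigma G y)).
Proof.
move=> Hs Hsd _ _ _ _ Hlt _ Hc lam /eigenvalueP [v Hv v0].
pose u p := v 0 (enum_rank p).
apply: (@core _ _ r blk (fun p q => ((jac sigma G y p q)%:C)%C) u).
- by move=> p q h; rewrite Hlt.
- move=> w; have [vv [h0 h1]] := @rowbound _ _ _ sigma G y r blk w Hs Hsd (Hc w).
  exists (fun q => ((vv q)%:C)%C); split.
    by move=> q hq; rewrite lecR h0.
  move=> p hp; have := h1 p hp; rewrite -ltcR rmorph_sum.
  apply: le_lt_trans; rewrite le_eqVlt; apply/orP; left; apply/eqP.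
  by apply: eq_bigr => q _; rewrite rmorphM normC_real.
- move=> q; move/matrixP: (Hv) => /(_ 0 (enum_rank q)).
  rewrite !mxE => <-.
  rewrite (reindex (@enum_rank _)); last by apply: onW_bij; apply: enum_rank_bij.
  by apply: eq_bigr => p _; rewrite !mxE !enum_rankK.
- case: (pselect (exists p, u p != 0)) => // hn.
  case/eqP: v0; apply/rowP => k; rewrite mxE.
  have := hn; apply: contra_notP => hk; exists (enum_val k).
  by rewrite /u enum_valK; apply/eqP.
Qed.
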